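(* Let $E,F$ be effect algebras and let $[E,F]$ denote the set of all generalized effect algebra homomorphisms $E\to F$ (maps $f$ with $f(0)=0$ such that $a\perp b$ implies $f(a)\perp f(b)$ and $f(a\oplus b)=f(a)\oplus f(b)$). For $f,g\in[E,F]$: (i) if $f(a)\perp g(a)$ for all $a\in E$, then the pointwise orthosum $f\oplus g\colon a\mapsto f(a)\oplus g(a)$ belongs to $[E,F]$; (ii) if $f\leq g$ pointwise, then the pointwise difference $g\ominus f\colon a\mapsto g(a)\ominus f(a)$ belongs to $[E,F]$. Consequently, $[E,F]$ with the pointwise partial operation $\oplus$ and the zero map as $0$ is a generalized effect algebra whose algebraic ordering ($f\le g$ iff $g=f\oplus k$ for some $k\in[E,F]$) coincides with the pointwise ordering.
   Context: An effect algebra is a partial algebra $(E;\oplus,',0,1)$ with $\oplus$ commutative and associative (as Kleene identities), $a\oplus b=1$ iff $b=a'$, and $a\oplus 1$ defined iff $a=0$. Write $a\perp b$ if $a\oplus b$ is defined; $a\le b$ iff $a\oplus c=b$ for some $c$; $b\ominus a$ denotes the unique such $c$ (cancellation holds). A generalized effect algebra is a partial commutative monoid $(E;\oplus,0)$ satisfying cancellation ($a\oplus b=a\oplus c\Rightarrow b=c$) and positivity ($a\oplus b=0\Rightarrow a=0$). *)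

(* Defs.v *)
From Stdlib Require Import ClassicalEpsilon.

Definition kbind {T : Type} (x : option T) (f : T -> option T) : option T :=
  match x with Some y => f y | None => None end.

(* Kleene associativity identity: (a (+) b) (+) c = a (+) (b (+) c), both sides
   defined and equal, or both undefined. *)
Definition kleene_assoc {T : Type} (op : T -> T -> option T) : Prop :=
  forall a b c, kbind (op a b) (fun ab => op ab c) = kbind (op b c) (fun bc => op a bc).

Record effect_algebra := EffectAlgebra {
  ea_car :> Type;
  ea_oplus : ea_car -> ea_car -> option ea_car;
  ea_compl : ea_car -> ea_car;
  ea_zero : ea_car;
  ea_one : ea_car;
  ea_comm : forall a b, ea_oplus a b = ea_oplus b a;
  ea_assoc : kleene_assoc ea_oplus;
  ea_ortho : forall a b, ea_oplus a b = Some ea_one <-> b = ea_compl a;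
  ea_zero_one : forall a, ea_oplus a ea_one <> None <-> a = ea_zero
}.

Arguments ea_oplus {e}.
Arguments ea_compl {e}.
Arguments ea_zero {e}.
Arguments ea_one {e}.

Definition ea_perp {E : effect_algebra} (a b : E) : Prop := ea_oplus a b <> None.

Definition ea_le {E : effect_algebra} (a b : E) : Prop := exists c, ea_oplus a c = Some b.

Definition is_gea {T : Type} (op : T -> T -> option T) (z : T) : Prop :=
  (forall a b, op a b = op b a) /\
  kleene_assoc op /\
  (forall a, op a z = Some a) /\
  (forall a b c x, op a b = Some x -> op a c = Some x -> b = c) /\
  (forall a b, op a b = Some z -> a = z).

Definition is_gea_hom {E F : effect_algebra} (f : E -> F) : Prop :=
  f ea_zero = ea_zero /\
  forall a b ab, ea_oplus a b = Some ab -> ea_oplus (f a) (f b) = Some (f ab).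

Definition hom_set (E F : effect_algebra) : Type := { f : E -> F | is_gea_hom f }.

(* pointwise partial operation on [E,F]: f (+) g is the element h of [E,F] with
   h a = f a (+) g a for all a, when such an element exists; undefined otherwise.
   (The theorem shows it is defined exactly when f, g are pointwise orthogonal.) *)
Definition hom_oplus {E F : effect_algebra} (f g : hom_set E F) : option (hom_set E F) :=
  match excluded_middle_informative
          (exists h : hom_set E F, forall a, ea_oplus (proj1_sig f a) (proj1_sig g a) = Some (proj1_sig h a))
  with
  | left e => Some (proj1_sig (constructive_indefinite_description _ e))
  | right _ => None
  end.

(* Main.v *)
Require Import Defs.
From Stdlib Require Import FunctionalExtensionality ProofIrrelevance ClassicalEpsilon.

Lemma assoc_l (E : effect_algebra) (x y z s t : E) :
  ea_oplus x y = Some s -> ea_oplus s z = Some t ->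
  exists u, ea_oplus y z = Some u /\ ea_oplus x u = Some t.
Proof.
  intros H1 H2. pose proof (ea_assoc E x y z) as H. unfold kbind in H.
  rewrite H1, H2 in H. destruct (ea_oplus y z) eqn:?; [eauto | discriminate].
Qed.

Lemma assoc_r (E : effect_algebra) (x y z u t : E) :
  ea_oplus y z = Some u -> ea_oplus x u = Some t ->
  exists s, ea_oplus x y = Some s /\ ea_oplus s z = Some t.
Proof.
  intros H1 H2. pose proof (ea_assoc E x y z) as H. unfold kbind in H.
  rewrite H1, H2 in H. destruct (ea_oplus x y) eqn:?; [eauto | discriminate].
Qed.

Lemma rearr (E : effect_algebra) (a b c d p q r : E) :
  ea_oplus a b = Some p -> ea_oplus c d = Some q -> ea_oplus p q = Some r ->
  exists s t, ea_oplus a c = Some s /\ ea_oplus b d = Some t /\ ea_oplus s t = Some r.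
Proof.
  intros H1 H2 H3.
  destruct (assoc_l _ _ _ _ _ _ H1 H3) as [u [Hu1 Hu2]].
  destruct (assoc_r _ _ _ _ _ _ H2 Hu1) as [v [Hv1 Hv2]].
  destruct (assoc_r _ _ _ _ _ _ Hv2 Hu2) as [w [Hw1 Hw2]].
  rewrite ea_comm in Hv1.
  destruct (assoc_r _ _ _ _ _ _ Hv1 Hw1) as [s [Hs1 Hs2]].
  destruct (assoc_l _ _ _ _ _ _ Hs2 Hw2) as [t [Ht1 Ht2]].
  eauto.
Qed.

Lemma ortho_self (E : effect_algebra) (a : E) : ea_oplus a (ea_compl a) = Some ea_one.
Proof. apply ea_ortho; reflexivity. Qed.

Lemma compl_compl (E : effect_algebra) (a : E) : ea_compl (ea_compl a) = a.
Proof.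
  pose proof (ortho_self E a) as H. rewrite ea_comm in H.
  apply ea_ortho in H. auto.
Qed.

Lemma ea_cancel (E : effect_algebra) (a b c x : E) :
  ea_oplus a b = Some x -> ea_oplus a c = Some x -> b = c.
Proof.
  intros Hb Hc. pose proof (ortho_self E x) as Hx.
  destruct (assoc_l _ _ _ _ _ _ Hb Hx) as [u [Hu1 Hu2]].
  destruct (assoc_l _ _ _ _ _ _ Hc Hx) as [v [Hv1 Hv2]].
  apply ea_ortho in Hu2. apply ea_ortho in Hv2. subst u v.
  pose proof (ortho_self E a) as Ha. rewrite ea_comm in Ha.
  destruct (assoc_l _ _ _ _ _ _ Hu1 Ha) as [m [Hm1 Hm2]].
  destruct (assoc_l _ _ _ _ _ _ Hv1 Ha) as [n [Hn1 Hn2]].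
  rewrite Hm1 in Hn1. injection Hn1 as ->.
  apply ea_ortho in Hm2. apply ea_ortho in Hn2.
  rewrite <- (compl_compl E b), <- (compl_compl E c). congruence.
Qed.

Lemma one_compl (E : effect_algebra) : ea_compl (@ea_one E) = ea_zero.
Proof.
  pose proof (ortho_self E ea_one) as H. rewrite ea_comm in H.
  apply ea_zero_one. congruence.
Qed.

Lemma one_zero (E : effect_algebra) : ea_oplus (@ea_one E) ea_zero = Some ea_one.
Proof. apply ea_ortho. symmetry. apply one_compl. Qed.

Lemma zero_r (E : effect_algebra) (a : E) : ea_oplus a ea_zero = Some a.
Proof.
  pose proof (ortho_self E a) as H. rewrite ea_comm in H.
  destruct (assoc_l _ _ _ _ _ _ H (one_zero E)) as [u [Hu1 Hu2]].
  apply ea_ortho in Hu2. rewrite compl_compl in Hu2. subst; auto.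
Qed.

Lemma positive (E : effect_algebra) (a b : E) : ea_oplus a b = Some ea_zero -> a = ea_zero.
Proof.
  intros H. pose proof (one_zero E) as H1. rewrite ea_comm in H1.
  destruct (assoc_l _ _ _ _ _ _ H H1) as [u [Hu1 Hu2]].
  assert (b = ea_zero) by (apply ea_zero_one; congruence). subst.
  rewrite zero_r in H. congruence.
Qed.

Lemma part1 (E F : effect_algebra) (f g : E -> F) : is_gea_hom f -> is_gea_hom g ->
     (forall a, ea_perp (f a) (g a)) ->
     exists h : E -> F, (forall a, ea_oplus (f a) (g a) = Some (h a)) /\ is_gea_hom h.
Proof.
  intros [f0 fa] [g0 ga] Hp.
  exists (fun a => match ea_oplus (f a) (g a) with Some x => x | None => ea_zero end).
  assert (Hs : forall a, ea_oplus (f a) (g a) =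
     Some (match ea_oplus (f a) (g a) with Some x => x | None => ea_zero end)).
  { intro a. specialize (Hp a). unfold ea_perp in Hp.
    destruct (ea_oplus (f a) (g a)); congruence. }
  split; [exact Hs|]. split.
  - rewrite f0, g0, zero_r. reflexivity.
  - intros a b ab Hab.
    destruct (rearr _ _ _ _ _ _ _ _ (fa _ _ _ Hab) (ga _ _ _ Hab) (Hs ab))
      as [s [t [H1 [H2 H3]]]].
    rewrite (Hs a) in H1. rewrite (Hs b) in H2.
    injection H1 as <-. injection H2 as <-. exact H3.
Qed.

Lemma part2 (E F : effect_algebra) (f g : E -> F) : is_gea_hom f -> is_gea_hom g ->
     (forall a, ea_le (f a) (g a)) ->
     exists h : E -> F, (forall a, ea_oplus (f a) (h a) = Some (g a)) /\ is_gea_hom h.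
Proof.
  intros [f0 fa] [g0 ga] Hl.
  set (hh := fun a => proj1_sig (constructive_indefinite_description _ (Hl a))).
  assert (Hs : forall a, ea_oplus (f a) (hh a) = Some (g a)).
  { intro a. unfold hh. destruct (constructive_indefinite_description _ (Hl a)); auto. }
  clearbody hh. exists hh.
  split; [exact Hs|]. split.
  - pose proof (Hs ea_zero) as H.
    rewrite f0, g0 in H. rewrite ea_comm in H.
    eapply positive; eauto.
  - intros a b ab Hab.
    destruct (rearr _ _ _ _ _ _ _ _ (Hs a) (Hs b) (ga _ _ _ Hab))
      as [s [t [H1 [H2 H3]]]].
    rewrite (fa _ _ _ Hab) in H1. injection H1 as <-.
    rewrite H2. f_equal. eapply ea_cancel; [exact H3 | exact (Hs ab)].
Qed.

Lemma hom_eq (E F : effect_algebra) (f g : hom_set E F) :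
  (forall a, proj1_sig f a = proj1_sig g a) -> f = g.
Proof.
  destruct f as [f Hf], g as [g Hg]; simpl; intros H.
  apply functional_extensionality in H. subst. f_equal. apply proof_irrelevance.
Qed.

Lemma hom_oplus_spec (E F : effect_algebra) (f g h : hom_set E F) :
  hom_oplus f g = Some h <->
  forall a, ea_oplus (proj1_sig f a) (proj1_sig g a) = Some (proj1_sig h a).
Proof.
  unfold hom_oplus. destruct excluded_middle_informative as [e|n].
  - destruct (constructive_indefinite_description _ e) as [h' Hh']; simpl.
    split.
    + intros H; injection H as <-; auto.
    + intros H. f_equal. apply hom_eq. intro a. specialize (H a). rewrite Hh' in H.
      congruence.
  - split; [discriminate|]. intros H. exfalso. apply n. eauto.
Qed.

Lemma hom_oplus_def (E F : effect_algebra) (f g : hom_set E F) :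
  hom_oplus f g <> None <-> forall a, ea_perp (proj1_sig f a) (proj1_sig g a).
Proof.
  split.
  - intros H a. destruct (hom_oplus f g) as [h|] eqn:E1; [|congruence].
    apply hom_oplus_spec with (a := a) in E1. unfold ea_perp. congruence.
  - intros H.
    destruct (part1 E F _ _ (proj2_sig f) (proj2_sig g) H) as [h [Hh1 Hh2]].
    assert (Hx : hom_oplus f g = Some (exist _ h Hh2))
      by (apply hom_oplus_spec; simpl; auto).
    rewrite Hx. discriminate.
Qed.

Lemma hom_assoc1 (E F : effect_algebra) (f g k r : hom_set E F) :
  kbind (hom_oplus f g) (fun fg => hom_oplus fg k) = Some r ->
  kbind (hom_oplus g k) (fun gk => hom_oplus f gk) = Some r.
Proof.
  unfold kbind. destruct (hom_oplus f g) as [p|] eqn:Hp; [|discriminate].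
  intros Hr. rewrite hom_oplus_spec in Hp, Hr.
  assert (Hq : hom_oplus g k <> None).
  { apply hom_oplus_def. intro a.
    destruct (assoc_l _ _ _ _ _ _ (Hp a) (Hr a)) as [u [Hu _]]. unfold ea_perp; congruence. }
  destruct (hom_oplus g k) as [q|] eqn:Hq'; [|congruence].
  rewrite hom_oplus_spec in Hq' |- *. intro a.
  destruct (assoc_l _ _ _ _ _ _ (Hp a) (Hr a)) as [u [Hu1 Hu2]].
  rewrite Hq' in Hu1. congruence.
Qed.

Lemma hom_assoc2 (E F : effect_algebra) (f g k r : hom_set E F) :
  kbind (hom_oplus g k) (fun gk => hom_oplus f gk) = Some r ->
  kbind (hom_oplus f g) (fun fg => hom_oplus fg k) = Some r.
Proof.
  unfold kbind. destruct (hom_oplus g k) as [p|] eqn:Hp; [|discriminate].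
  intros Hr. rewrite hom_oplus_spec in Hp, Hr.
  assert (Hq : hom_oplus f g <> None).
  { apply hom_oplus_def. intro a.
    destruct (assoc_r _ _ _ _ _ _ (Hp a) (Hr a)) as [u [Hu _]]. unfold ea_perp; congruence. }
  destruct (hom_oplus f g) as [q|] eqn:Hq'; [|congruence].
  rewrite hom_oplus_spec in Hq' |- *. intro a.
  destruct (assoc_r _ _ _ _ _ _ (Hp a) (Hr a)) as [u [Hu1 Hu2]].
  rewrite Hq' in Hu1. congruence.
Qed.

Theorem lemma3p1 (E F : effect_algebra) :
  (* (i) pointwise orthosum *)
  (forall f g : E -> F, is_gea_hom f -> is_gea_hom g ->
     (forall a, ea_perp (f a) (g a)) ->
     exists h : E -> F, (forall a, ea_oplus (f a) (g a) = Some (h a)) /\ is_gea_hom h) /\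
  (* (ii) pointwise difference g (-) f : the unique c with f a (+) c = g a *)
  (forall f g : E -> F, is_gea_hom f -> is_gea_hom g ->
     (forall a, ea_le (f a) (g a)) ->
     exists h : E -> F, (forall a, ea_oplus (f a) (h a) = Some (g a)) /\ is_gea_hom h) /\
  (* the operation on [E,F] is the pointwise one *)
  (forall f g : hom_set E F,
     (hom_oplus f g <> None <->
        forall a, ea_perp (proj1_sig f a) (proj1_sig g a)) /\
     (forall h, hom_oplus f g = Some h ->
        forall a, ea_oplus (proj1_sig f a) (proj1_sig g a) = Some (proj1_sig h a))) /\
  (* [E,F] with zero map is a GEA, with algebraic order = pointwise order *)
  (exists z : hom_set E F,
     (forall a, proj1_sig z a = ea_zero) /\
     is_gea (@hom_oplus E F) z /\
     (forall f g : hom_set E F,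
        (exists k : hom_set E F, hom_oplus f k = Some g) <->
        (forall a, ea_le (proj1_sig f a) (proj1_sig g a)))).
Proof.
  split; [exact (part1 E F)|]. split; [exact (part2 E F)|]. split.
  { intros f g. split; [apply hom_oplus_def|]. intros h; apply hom_oplus_spec. }
  assert (Hz : is_gea_hom (fun _ : E => @ea_zero F)).
  { split; [reflexivity|]. intros; apply zero_r. }
  exists (exist _ _ Hz). split; [reflexivity|]. split.
  - split; [|split; [|split; [|split]]].
    + intros f g. destruct (hom_oplus f g) as [h|] eqn:H1.
      * symmetry. rewrite hom_oplus_spec in H1 |- *. intro a. rewrite ea_comm; auto.
      * destruct (hom_oplus g f) as [h|] eqn:H2; [|reflexivity].
        rewrite hom_oplus_spec in H2. exfalso.
        assert (hom_oplus f g = Some h) by (apply hom_oplus_spec; intro a; rewrite ea_comm; auto).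
        congruence.
    + intros f g k.
      destruct (kbind (hom_oplus f g) (fun fg => hom_oplus fg k)) as [r|] eqn:H1.
      * symmetry. apply hom_assoc1; auto.
      * destruct (kbind (hom_oplus g k) (fun gk => hom_oplus f gk)) as [r|] eqn:H2;
          [|reflexivity].
        apply hom_assoc2 in H2. congruence.
    + intros f. apply hom_oplus_spec. intro a. apply zero_r.
    + intros f g k x H1 H2. rewrite hom_oplus_spec in H1, H2. apply hom_eq.
      intro a. eapply ea_cancel; eauto.
    + intros f g H. rewrite hom_oplus_spec in H. apply hom_eq. intro a.
      eapply positive; eauto.
  - intros [f Hf] [g Hg]. simpl. split.
    + intros [k Hk] a. rewrite hom_oplus_spec in Hk. exists (proj1_sig k a); auto.
    + intros Hl. destruct (part2 E F f g Hf Hg Hl) as [h [Hh1 Hh2]].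
      exists (exist _ h Hh2). apply hom_oplus_spec. simpl; auto.
Qed.
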